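(* Let $n,m$ be positive integers and $\mathbf{r}=(r_1,\dots,r_m)$, $\mathbf{s}=(s_1,\dots,s_m)$ sequences of nonnegative integers with sums $r$ and $s$. Then \begin{multline*} \sum_{d_0,d_1,\dots,d_{n}\ge 0} |\mathrm{SB}(n,\mathbf{r},\mathbf{s};d_0,d_1,\dots,d_{n})| \frac{t_0^{d_0} t_1^{d_1} \cdots t_{n}^{d_{n}}}{d_0!d_1!\cdots d_{n}!} =\prod_{i=1}^n (t_0 + t_{1} +\dots + t_{i-1})^r (t_i + t_{i+1} +\dots + t_{n})^s\\ \times \prod_{i=1}^m (t_0+t_1+\dots+t_n)^{r_is_i} \prod_{1\le i<j\le n} \left(t_i + t_{i+1} +\dots + t_{j-1}\right)^m. \end{multline*}
   Context: For nonnegative integers $p,q$, the $(n,p,q)$-staircase is the set of cells $(i,j)$ with $1\le i\le p+n$, $1\le j\le n+q$, $i\le j+p$; the cell $(j+p,j)$ ($1\le j\le n$) is its $j$th diagonal cell (row $i>p$ contains $(i,i-p)$, column $j\le n$ contains $(j+p,j)$, other rows/columns contain no diagonal cell). Take pages = the $(n,r_i,s_i)$-staircases, $1\le i\le m$, identifying the $j$th diagonal cells of all pages for each $j$. An $(n,\mathbf{r},\mathbf{s})$-Selberg book is a filling of the resulting cells with $1,\dots,N$, $N=(r+s+1)n+m\binom n2+\sum_i r_is_i$, each used once, such that in each page every non-diagonal cell has entry larger than that of the diagonal cell in its row (if any) and smaller than that of the diagonal cell in its column (if any). With $e_j$ the entry of the $j$th diagonal cell, $e_0=0$, $e_{n+1}=N+1$,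 $\mathrm{SB}(n,\mathbf{r},\mathbf{s};d_0,\dots,d_n)$ is the set of such books with $d_j=e_{j+1}-e_j-1$ for $j=0,\dots,n$. *)

(* Defs.v *)
From HB Require Import structures.
From mathcomp Require Import all_boot all_order all_algebra.
From mathcomp Require Import mpoly.

Set Implicit Arguments.
Unset Strict Implicit.
Unset Printing Implicit Defensive.

Import Order.TTheory GRing.Theory Num.Theory.

(* Pages are indexed by i : 'I_m (page i here = page i+1 of
   the paper); r, s : 'I_m -> nat are the sequences r_1..r_m, s_1..s_m.
   Rows/columns a, b and diagonal indices j are 1-based natural numbers, as
   in the paper. *)

Section SelbergBook.
Variables (n m : nat) (r s : 'I_m -> nat).

Definition rsum := \sum_(i < m) r i.
Definition ssum := \sum_(i < m) s i.

Definition SB_N : nat :=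
  (rsum + ssum + 1) * n + m * 'C(n, 2) + \sum_(i < m) r i * s i.

(* bound for row/column coordinates *)
Definition SB_K : nat := n + rsum + ssum.

Definition page_cell (i : 'I_m) (a b : nat) : bool :=
  [&& 1 <= a <= r i + n, 1 <= b <= n + s i & a <= b + r i].

Definition diag_cell (i : 'I_m) (a b : nat) : bool :=
  (1 <= b <= n) && (a == b + r i).

Definition ndcell (c : 'I_m * 'I_SB_K.+1 * 'I_SB_K.+1) : bool :=
  page_cell c.1.1 c.1.2 c.2 && ~~ diag_cell c.1.1 c.1.2 c.2.

(* Cells of the book: the n (identified) diagonal cells (inl k stands for
   the (k+1)-th diagonal cell), plus the non-diagonal cells of all pages. *)
Definition book_cell : finType :=
  ('I_n + {c : 'I_m * 'I_SB_K.+1 * 'I_SB_K.+1 | ndcell c})%type.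

Definition filling := {ffun book_cell -> 'I_SB_N.+1}.

(* entry of the j-th diagonal cell, 1 <= j <= n *)
Definition diag_entry (f : filling) (j : nat) : nat :=
  oapp (fun k : 'I_n => val (f (inl k))) 0 (insub j.-1 : option 'I_n).

Definition e_ (f : filling) (j : nat) : nat :=
  if j == 0 then 0 else if j <= n then diag_entry f j else SB_N.+1.

Definition is_filling (f : filling) : bool :=
  perm_eq [seq val (f c) | c <- enum book_cell] (iota 1 SB_N).

(* every non-diagonal cell (a,b) of page i has an entry larger than the
   diagonal cell in its row (row a contains the diagonal cell of index
   a - r_i iff a > r_i) and smaller than the diagonal cell in its column
   (column b contains the diagonal cell of index b iff b <= n). *)
Definition book_condition (f : filling) : bool :=
  [forall c : {c : 'I_m * 'I_SB_K.+1 * 'I_SB_K.+1 | ndcell c},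
     let i := (val c).1.1 in
     let a := val (val c).1.2 in
     let b := val (val c).2 in
     let x := val (f (inr c)) in
     ((r i < a) ==> (diag_entry f (a - r i) < x)) &&
     ((b <= n) ==> (x < diag_entry f b))].

Definition is_selberg_book (f : filling) : bool :=
  is_filling f && book_condition f.

Definition SB (d : 'I_n.+1 -> nat) : {set filling} :=
  [set f : filling | is_selberg_book f &&
     [forall j : 'I_n.+1, e_ f j.+1 == e_ f j + d j + 1]].

End SelbergBook.

Definition tsum (n a b : nat) : {mpoly rat[n.+1]} :=
  \sum_(a <= k < b) 'X_(inord k).

(* Main.v *)
Require Import Defs.
From HB Require Import structures.
From mathcomp Require Import all_boot all_order all_algebra.
From mathcomp Require Import mpoly.
From mathcomp Require Import zify ring.
Import GRing.Theory.
Set Implicit Arguments.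
Unset Strict Implicit.
Unset Printing Implicit Defensive.

Lemma card_label_tuples (B J : finType) (be : B -> J) n :
  forall (ls : seq J) (A : pred B), size ls = n ->
  #|[set t : n.-tuple B | [&& all A t, uniq t & map be t == ls]]| =
  \prod_(j : J) #|[predI A & [pred b | be b == j]]| ^_ count_mem j ls.
Proof.
elim: n => [|n IHn] ls A.
  case: ls => // _; rewrite big1 // (@eq_card1 _ [tuple]) // => t.
  by rewrite [t]tuple0 inE.
case: ls => // l ls [Hs].
rewrite -sum1dep_card (partition_big (@thead _ _) [predI A & [pred b | be b == l]]) /=; last first.
  case/tupleP=> x t; rewrite theadE /= => /and3P[/andP[Ax _] _ /eqP[bx _]]. by apply/andP; split; [exact: Ax|rewrite inE /=; apply/eqP].
transitivity (\sum_(x in [predI A & [pred b | be b == l]])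
   \prod_(j : J) #|[predI [predD1 A & x] & [pred b | be b == j]]| ^_ count_mem j ls).
  apply: eq_bigr => x /andP[Ax /eqP bx].
  rewrite -(IHn ls [predD1 A & x] Hs) -sum1dep_card.
  rewrite (reindex (fun t : n.-tuple B => [tuple of x :: t])) /=; last first.
    pose ttail (t : n.+1.-tuple B) := [tuple of behead t].
    exists ttail => [t _ | t /andP[_ /eqP <-]]; first exact: val_inj.
    by rewrite -tuple_eta.
  apply: eq_bigl=> t; have Ax' : A x := Ax.
  rewrite Ax' theadE eqxx andbT /= eqseq_cons bx eqxx /=.
  rewrite all_predI all_predC has_pred1.
  by case: (x \in t); case: (all A t); case: (uniq t).
transitivity (\sum_(x in [predI A & [pred b | be b == l]])
   (#|[predI A & [pred b | be b == l]]|.-1 ^_ count_mem l ls *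
   \prod_(j | j != l) #|[predI A & [pred b | be b == j]]| ^_ count_mem j ls)).
  apply: eq_bigr => x /andP[Ax bx]; rewrite (bigD1 l) //=; congr (_ * _).
    congr (_ ^_ _); rewrite [in RHS](cardD1 x) inE Ax bx /=.
    by apply: eq_card => y; rewrite !inE andbA.
  apply: eq_bigr => j /negbTE jl; congr (_ ^_ _); apply: eq_card => y.
  rewrite !inE; case: eqP => [->|] //=; rewrite (eqP bx) eq_sym jl.
  by rewrite andbF.
rewrite sum_nat_const [in RHS](bigD1 l) //= eqxx add1n ffactnS mulnA; congr (_ * _).
apply: eq_bigr => j /negbTE jl; by rewrite eq_sym jl.
Qed.

Lemma card_pred_count (T : finType) (P : pred T) : #|[pred x | P x]| = count P (enum T).
Proof. by rewrite cardE /enum_mem size_filter count_filter; apply: eq_count => x; rewrite !inE andbT. Qed.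

Lemma card_label_ffuns (A B J : finType) (al : A -> J) (be : B -> J) :
  #|[set h : {ffun A -> B} | injectiveb h && [forall a, be (h a) == al a]]| =
  \prod_(j : J) #|[pred b | be b == j]| ^_ #|[pred a | al a == j]|.
Proof.
have := @card_label_tuples B J be #|A| (map al (enum A)) predT.
rewrite size_map -cardT => /(_ erefl) HT.
transitivity (\prod_(j : J) #|[predI predT & [pred b | be b == j]]| ^_
      count_mem j [seq al i | i <- enum A]); last first.
  apply: eq_bigr => j _; congr (_ ^_ _).
  by rewrite count_map card_pred_count.
rewrite -HT.
have bijFF: {on (_ : pred _), bijective (@Finfun A B)}.
  by exists fgraph => x _; [apply: FinfunK | apply: fgraphK].
rewrite -(on_card_preimset (bijFF _)); apply: eq_card => /= t.
rewrite !inE /= all_predT /=.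
have -> : injectiveb (Finfun t) = uniq t.
  by rewrite /injectiveb /dinjectiveb -codomE codom_ffun FinfunK.
congr (_ && _).
have -> : [seq be i | i <- t] = [seq be (Finfun t a) | a <- enum A].
  by rewrite -[in LHS](FinfunK t) -codom_ffun codomE -map_comp.
apply/forallP/eqP => [H | /eqP H a].
  by apply: eq_map => a; apply/eqP/H.
apply/eqP; move/eqP/eq_in_map: H; apply; by rewrite mem_enum.
Qed.

Section Generic.
Variables (R : Type) (idx : R) (op : Monoid.com_law idx).
Local Notation "\big_ ( m <= i < n | P ) F" := (\big[op/idx]_(m <= i < n | P) F)
  (at level 41, F at level 41, i, m, n at level 50).
Local Notation "\big_ ( m <= i < n ) F" := (\big[op/idx]_(m <= i < n) F)
  (at level 41, F at level 41, i, m, n at level 50).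

Lemma big_restr K lo hi (P : pred nat) (H : nat -> R) : hi <= K ->
  (forall a, a < K -> P a = (lo <= a < hi)) ->
  \big[op/idx]_(0 <= a < K | P a) H a = \big[op/idx]_(lo <= a < hi) H a.
Proof.
move=> hiK HP; rewrite (@big_nat_widenl _ _ _ lo 0) // (@big_nat_widen _ _ _ 0 hi K) //.
rewrite big_nat_cond [RHS]big_nat_cond; apply: eq_bigl => a.
case: (ltnP a K) => aK; last first.
  rewrite andbF; case: (ltnP a hi) => ahi; rewrite ?andbF //.
by rewrite HP.
Qed.
End Generic.

Notation Cell n m r s := {c : 'I_m * 'I_(SB_K n r s).+1 * 'I_(SB_K n r s).+1 | @ndcell n m r s c}.

Section Cells.
Variables (n m : nat) (r s : 'I_m -> nat).
Local Notation K := (SB_K n r s).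
Local Notation Cell := (Cell n m r s).
Definition lo_n (i : 'I_m) (a : nat) := if r i < a then a - r i else 0.
Definition hi_n (b : nat) := if b <= n then b else n.+1.
Definition clo (c : Cell) : nat := lo_n (val c).1.1 (val (val c).1.2).
Definition chi (c : Cell) : nat := hi_n (val (val c).2).
Definition cnd (i : 'I_m) (a b : nat) :=
  page_cell n r s i a b && ~~ diag_cell n r i a b.

Lemma r_le_K (i : 'I_m) : r i + n + s i < K.+1.
Proof.
have H1 : r i <= rsum r by rewrite /rsum (bigD1 i) //= leq_addr.
have H2 : s i <= ssum s by rewrite /ssum (bigD1 i) //= leq_addr.
rewrite /SB_K; lia.
Qed.

Variables (R : Type) (idx : R) (op : Monoid.com_law idx).
Variable F : nat -> nat -> R.

Lemma cells_big :
  \big[op/idx]_(c : Cell) F (clo c) (chi c) =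
  \big[op/idx]_(i < m)
    op (\big[op/idx]_(1 <= a < (r i).+1)
          op (\big[op/idx]_(1 <= b < n.+1) F 0 b)
             (\big[op/idx]_(n.+1 <= b < n + s i + 1) F 0 n.+1))
       (\big[op/idx]_(1 <= j < n.+1)
          op (\big[op/idx]_(j.+1 <= b < n.+1) F j b)
             (\big[op/idx]_(n.+1 <= b < n + s i + 1) F j n.+1)).
Proof.
pose G (x : 'I_m * 'I_K.+1 * 'I_K.+1) := F (lo_n x.1.1 x.1.2) (hi_n x.2).
transitivity (\big[op/idx]_(x | @ndcell n m r s x) G x).
  rewrite [RHS](reindex_omap (val : Cell -> _) insub); last first.
    by move=> x Px; rewrite insubT.
  by apply: eq_bigl => -[x Px] /=; rewrite insubT ?Px /= eqxx.
transitivity (\big[op/idx]_(i < m) \big[op/idx]_(0 <= a < K.+1)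
   \big[op/idx]_(0 <= b < K.+1 | cnd i a b) F (lo_n i a) (hi_n b)).
  rewrite (eq_bigl (fun p => true && @ndcell n m r s (p.1, p.2))); last by case.
  rewrite (eq_bigr (fun p => G (p.1, p.2))); last by case.
  rewrite -(pair_big_dep xpredT (fun i j => @ndcell n m r s (i,j)) (fun i j => G (i,j))).
  rewrite (eq_bigr (fun p => (fun x y => \big[op/idx]_(j | @ndcell n m r s ((x,y),j)) G ((x,y),j)) p.1 p.2)); last by case.
  rewrite -(pair_big xpredT xpredT (fun x y => \big[op/idx]_(j | @ndcell n m r s ((x,y),j)) G ((x,y),j))) /=.
  apply: eq_bigr => i _; rewrite big_mkord; apply: eq_bigr => a _.
  by rewrite big_mkord.
apply: eq_bigr => i _; have hK := r_le_K i.
have cnd0 a b : cnd i a b -> 1 <= a < r i + n + 1.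
  rewrite /cnd /page_cell; lia.
rewrite [LHS](eq_big_nat _ _ (F2 := fun a => if 1 <= a < r i + n + 1 then
   \big[op/idx]_(0 <= b < K.+1 | cnd i a b) F (lo_n i a) (hi_n b) else idx)); last first.
  move=> a _; case: ifP => // Ha; apply: big_pred0 => b.
  by apply/negP => /cnd0; rewrite Ha.
rewrite -big_mkcond (big_restr _ (lo:=1) (hi:=r i + n + 1)); last 2 first.
- by lia.
- by [].
rewrite (big_cat_nat _ (n:=(r i).+1)) //=; last by lia.
congr (op _ _).
  apply: eq_big_nat => a Ha.
  rewrite (big_restr _ (lo:=1) (hi:=n + s i + 1)); last 2 first.
  - by lia.
  - move=> b _; rewrite /cnd /page_cell /diag_cell; lia.
  rewrite (big_cat_nat _ (n:=n.+1)) //=; last by lia.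
  have -> : lo_n i a = 0 by rewrite /lo_n; case: ifP => //; lia.
  congr (op _ _); apply: eq_big_nat => b Hb; rewrite /hi_n; case: ifP => //; lia.
rewrite -(add1n (r i)) big_addn.
have -> : r i + n + 1 - r i = n.+1 by lia.
apply: eq_big_nat => j Hj.
rewrite (big_restr _ (lo:=j.+1) (hi:=n + s i + 1)); last 2 first.
- by lia.
- move=> b _; rewrite /cnd /page_cell /diag_cell; lia.
rewrite (big_cat_nat _ (n:=n.+1)) //=; try lia.
have -> : lo_n i (j + r i) = j by rewrite /lo_n; case: ifP => //; lia.
congr (op _ _); apply: eq_big_nat => b Hb; rewrite /hi_n; case: ifP => //; lia.
Qed.
End Cells.

Lemma sum_nmj n0 : \sum_(1 <= j < n0.+1) (n0 - j) = 'C(n0, 2).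
Proof.
rewrite big_nat_rev big_add1 /= -bin2_sum; apply: eq_big_nat => j Hj; lia.
Qed.

Lemma card_Cell n m (r s : 'I_m -> nat) : #|{: Cell n m r s}| + n = SB_N n r s.
Proof.
have := cells_big n r s addn (fun _ _ => 1%N).
rewrite /=.
rewrite sum1_card => ->.
rewrite /SB_N /rsum /ssum.
rewrite (eq_bigr (fun i => r i * n + r i * s i + ('C(n,2) + n * s i))%N); last first.
  move=> i _; rewrite !sum_nat_const_nat.
  rewrite (eq_big_nat _ _ (F2 := fun j => (n - j) + s i)%N); last first.
    move=> j Hj; rewrite !sum_nat_const_nat !muln1. lia.
  rewrite big_split /= sum_nmj sum_nat_const_nat; lia.
rewrite !big_split /= -big_distrl -big_distrr /= sum_nat_const card_ord.
lia.
Qed.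


Section RingPart.
Local Open Scope ring_scope.
Lemma rhs_cells n m (r s : 'I_m -> nat) :
  \prod_(1 <= i < n.+1)
        (tsum n 0 i ^+ @rsum m r * tsum n i n.+1 ^+ @ssum m s)
    * \prod_(i < m) tsum n 0 n.+1 ^+ (r i * s i)
    * \prod_(1 <= i < n.+1) \prod_(i.+1 <= j < n.+1) tsum n i j ^+ m
  = \prod_(c : Cell n m r s) tsum n (clo c) (chi c).
Proof.
have := cells_big n r s *%R (tsum n); rewrite /= => ->.
set A := \prod_(1 <= b < n.+1) tsum n 0 b.
set B := fun j => tsum n j n.+1.
set D := fun j => \prod_(j.+1 <= b < n.+1) tsum n j b.
rewrite [RHS](eq_bigr (fun i => (A ^+ r i * B 0%N ^+ (r i * s i)%N) *
     (\prod_(1 <= j < n.+1) D j * \prod_(1 <= j < n.+1) B j ^+ s i))); last first.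
  move=> i _; rewrite !prodr_const_nat.
  under eq_big_nat => j Hj do rewrite prodr_const_nat.
  rewrite big_split /= exprMn -exprM.
  have -> : (n + s i + 1 - n.+1 = s i)%N by lia.
  have -> : ((r i).+1 - 1 = r i)%N by lia.
  by rewrite mulnC.
rewrite big_split /= big_split /= big_split /=.
rewrite prodrXr -/(rsum r) big_split /=.
rewrite [X in _ = _ * (X * _)]exchange_big [X in _ = _ * (_ * X)]exchange_big /=.
under [in RHS]eq_big_nat => j Hj do rewrite prodr_const card_ord.
rewrite [X in _ = _ * (_ * X)](eq_big_nat _ _ (F2 := fun j => B j ^+ ssum s)); last first.
  by move=> j _; rewrite prodrXr.
rewrite [X in _ = X * _ * _]prodrXr -/(rsum r) prodrXl -/A.
rewrite [X in _ * X = _](eq_big_nat _ _ (F2 := fun i => D i ^+ m)); last first.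
  by move=> i _; rewrite prodrXl.
rewrite /B /=.
ring.
Qed.

End RingPart.
Section Expand.
Local Open Scope ring_scope.
Variables (n m : nat) (r s : 'I_m -> nat).
Local Notation Cell := (Cell n m r s).
Local Notation N := (SB_N n r s).

Definition valid (g : {ffun Cell -> 'I_n.+1}) :=
  [forall c, (clo c <= g c < chi c)%N].
Definition cnt (g : {ffun Cell -> 'I_n.+1}) : {ffun 'I_n.+1 -> 'I_N.+1} :=
  [ffun j => inord #|[pred c | g c == j]|].
Definition Gd (d : {ffun 'I_n.+1 -> 'I_N.+1}) :=
  [set g | valid g && (cnt g == d)].

Lemma chi_le (c : Cell) : (chi c <= n.+1)%N.
Proof. by rewrite /chi /hi_n; case: ifP => // /leqW. Qed.

Lemma tsum_ord a b : (b <= n.+1)%N ->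
  tsum n a b = \sum_(k < n.+1 | (a <= k < b)%N) 'X_k.
Proof.
move=> hb; rewrite /tsum.
rewrite (eq_bigr (fun k : 'I_n.+1 => 'X_(inord (val k)))); last first.
  by move=> k _; rewrite inord_val.
rewrite -(big_mkord (fun k => (a <= k < b)%N) (fun k => 'X_(inord k))).
by rewrite (big_restr _ (lo:=a) (hi:=b)).
Qed.

Lemma prod_X (g : {ffun Cell -> 'I_n.+1}) :
  \prod_c ('X_(g c) : {mpoly rat[n.+1]}) =
  \prod_(j < n.+1) 'X_j ^+ #|[pred c | g c == j]|.
Proof.
rewrite (partition_big g predT) //=; apply: eq_bigr => j _.
rewrite (eq_bigr (fun _ => 'X_j)); last by move=> c /eqP ->.
by rewrite prodr_const.
Qed.

Lemma cnt_le (g : {ffun Cell -> 'I_n.+1}) j : (#|[pred c | g c == j]| < N.+1)%N.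
Proof.
rewrite ltnS -(card_Cell n r s); apply: leq_trans (leq_addr _ _).
exact: max_card.
Qed.

Lemma expand :
  \prod_(c : Cell) tsum n (clo c) (chi c) =
  \sum_(d : {ffun 'I_n.+1 -> 'I_N.+1})
     (#|Gd d|)%:R *: \prod_(j < n.+1) 'X_j ^+ (val (d j)).
Proof.
rewrite (eq_bigr (fun c => \sum_(k < n.+1 | (clo c <= k < chi c)%N) 'X_k)); last first.
  by move=> c _; rewrite tsum_ord // chi_le.
rewrite bigA_distr_big_dep /=.
rewrite (partition_big cnt predT) //=; apply: eq_bigr => d _.
rewrite scaler_nat -sumr_const; apply: eq_big.
  by move=> g; rewrite !inE /valid.
move=> g /andP[_ /eqP <-]; rewrite prod_X; apply: eq_bigr => j _.
by rewrite ffunE inordK // cnt_le.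
Qed.
End Expand.

Lemma big_option_split (R : Type) (idx : R) (op : Monoid.com_law idx) (J : finType)
   (F : option J -> R) :
  \big[op/idx]_(o : option J) F o = op (F None) (\big[op/idx]_(j : J) F (Some j)).
Proof.
rewrite (bigD1 None) //=; congr (op _ _).
rewrite (reindex_omap Some id) //=; last by case.
by apply: eq_bigl => j; rewrite eqxx.
Qed.

Section Comb.
Variables (n m : nat) (r s : 'I_m -> nat).
Local Notation Cell := (Cell n m r s).
Local Notation N := (SB_N n r s).
Variable d : {ffun 'I_n.+1 -> 'I_N.+1}.

Definition dn (i : nat) : nat := val (d (inord i)).
Definition E (j : nat) : nat := \sum_(0 <= i < j) (dn i).+1.

Lemma E0 : E 0 = 0.
Proof. by rewrite /E big_geq. Qed.

Lemma ES j : E j.+1 = E j + (dn j).+1.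
Proof. by rewrite /E big_nat_recr. Qed.

Lemma E_mono j k : j <= k -> E j <= E k.
Proof.
move=> jk; rewrite /E [X in _ <= X](big_cat_nat _ (n:=j)) //=; exact: leq_addr.
Qed.

Lemma E_smono j k : j < k -> E j < E k.
Proof.
move=> jk; apply: leq_trans (E_mono jk); rewrite ES; lia.
Qed.

Lemma E_inj j k : E j = E k -> j = k.
Proof.
move=> H; case: (ltngtP j k) => // jk.
- by have := E_smono jk; rewrite H ltnn.
- by have := E_smono jk; rewrite H ltnn.
Qed.

Lemma dn_ord (j : 'I_n.+1) : dn j = val (d j).
Proof. by rewrite /dn inord_val. Qed.

Definition label (v : 'I_N.+1) : option 'I_n.+1 :=
  [pick j : 'I_n.+1 | E j < v < E j.+1].

Lemma labelP v (j : 'I_n.+1) : (label v == Some j) = (E j < v < E j.+1).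
Proof.
rewrite /label; case: pickP => [j' /andP[H1 H2] | H].
  apply/eqP/idP => [[<-] | /andP[H3 H4]]; first by rewrite H1 H2.
  congr Some; apply: val_inj => /=; case: (ltngtP j' j) => // jj.
    by have := E_mono jj; lia.
  by have := E_mono jj; lia.
by rewrite H.
Qed.

Lemma gap_exists v k : E 0 < v -> (forall i, 0 < i < k -> v != E i) -> v < E k ->
  exists2 j, j < k & E j < v < E j.+1.
Proof.
elim: k => [|k IH] H0 Hne Hk; first by lia.
case: (ltnP v (E k)) => vk.
  have [j jk Hj] := IH H0 (fun i Hi => Hne i (ltac:(lia))) vk.
  by exists j => //; lia.
exists k => //; rewrite Hk andbT ltn_neqAle vk andbT.
case: k {IH vk Hk} Hne => [|k] Hne; first by rewrite eq_sym; lia.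
by rewrite eq_sym; apply: Hne; lia.
Qed.

Lemma card_label (j : 'I_n.+1) : E j.+1 <= N.+1 ->
  #|[pred v : 'I_N.+1 | label v == Some j]| = val (d j).
Proof.
move=> HE; rewrite -dn_ord -sum1_card.
rewrite (eq_bigl (fun v : 'I_N.+1 => E j < v < E j.+1)); last first.
  by move=> v; rewrite inE labelP.
rewrite -(big_mkord (fun v => E j < v < E j.+1) (fun _ => 1)).
rewrite (big_restr _ (lo := (E j).+1) (hi := E j.+1)) //.
rewrite sum_nat_const_nat ES; lia.
Qed.


Lemma diag_entry_ord (f : filling n r s) (k : 'I_n) :
  diag_entry f k.+1 = val (f (inl k)).
Proof. by rewrite /diag_entry (_ : k.+1.-1 = k) // valK. Qed.

Lemma e_diag (f : filling n r s) j : 0 < j <= n -> e_ f j = diag_entry f j.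
Proof. by rewrite /e_; case: j => // j => /andP[_ ->]. Qed.

Lemma e_last (f : filling n r s) : e_ f n.+1 = N.+1.
Proof. by rewrite /e_ ltnn. Qed.

Lemma chainP (f : filling n r s) :
  reflect (forall j, j <= n.+1 -> e_ f j = E j)
    [forall j : 'I_n.+1, e_ f j.+1 == e_ f j + val (d j) + 1].
Proof.
apply: (iffP forallP) => H.
  elim => [_|j IH Hj]; first by rewrite E0 /e_ eqxx.
  move/eqP: (H (Ordinal Hj)) => ->.
  have -> : val (d (Ordinal Hj)) = dn j by rewrite -dn_ord.
  rewrite IH; last exact: ltnW.
  by rewrite ES addn1 addnS.
move=> j; rewrite (H j.+1 (ltn_ord j)) (H j (ltnW (ltn_ord j))) ES dn_ord.
by rewrite addnS addn1.
Qed.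

Definition good := E n.+1 == N.+1.

Definition allowed (c : Cell) (o : option 'I_n.+1) :=
  if o is Some j then clo c <= j < chi c else false.
Definition Hset := [set h : {ffun Cell -> 'I_N.+1} |
  injectiveb h && [forall c, allowed c (label (h c))]].
Definition restr (f : filling n r s) : {ffun Cell -> 'I_N.+1} :=
  [ffun c => f (inr c)].
Definition ext (h : {ffun Cell -> 'I_N.+1}) : filling n r s :=
  [ffun x : book_cell n r s => match x with
     inl k => inord (E (nat_of_ord k).+1) | inr c => h c end].

Lemma restr_ext h : restr (ext h) = h.
Proof. by apply/ffunP => c; rewrite !ffunE. Qed.

Lemma diagE (f : filling n r s) :
  (forall j, j <= n.+1 -> e_ f j = E j) -> forall j, 0 < j <= n -> diag_entry f j = E j.
Proof. by move=> Hc j Hj; rewrite -e_diag // Hc //; lia. Qed.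

Lemma allowed_of (f : filling n r s) (c : Cell) (j : 'I_n.+1) :
  (forall j, j <= n.+1 -> e_ f j = E j) -> good ->
  (let i := (val c).1.1 in let a := val (val c).1.2 in let b := val (val c).2 in
   let x := val (f (inr c)) in
     ((r i < a) ==> (diag_entry f (a - r i) < x)) &&
     ((b <= n) ==> (x < diag_entry f b))) ->
  val (f (inr c)) <= N ->
  E j < val (f (inr c)) < E j.+1 -> allowed c (Some j).
Proof.
move=> Hc Hgood.
case: c => [[[i a] b] Hp] /=.
have := Hp; rewrite /ndcell /page_cell /= => /andP[/and3P[Ha Hb Hab] _].
rewrite /allowed /clo /chi /=.
set v := val (f _) => /andP[Hra Hbn] HvN /andP[Hj1 Hj2].
have Hlo : E (lo_n r i a) < v.
  rewrite /lo_n; case: ifP => ria.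
    by move: Hra; rewrite ria /= diagE //; lia.
  by rewrite E0; lia.
have Hhi : v < E (hi_n n b).
  rewrite /hi_n; case: ifP => bn.
    by move: Hbn; rewrite bn /= diagE //; lia.
  by rewrite (eqP Hgood).
apply/andP; split.
  rewrite leqNgt; apply/negP => /E_mono HE; lia.
rewrite ltnNge; apply/negP => /E_mono HE; lia.
Qed.

Lemma SB_fwd (f : filling n r s) : f \in @SB n m r s (fun j => val (d j)) ->
  [/\ good, (forall k : 'I_n, val (f (inl k)) = E k.+1) & restr f \in Hset].
Proof.
rewrite inE => /andP[/andP[Hfill Hbook] /chainP Hc].
have Hgood : good by rewrite /good -(Hc n.+1 (leqnn _)) e_last.
have Hdiag k : val (f (inl k)) = E k.+1.
  by rewrite -diag_entry_ord diagE //; have := ltn_ord k; lia.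
have Huniq : uniq [seq val (f x) | x <- enum (book_cell n r s)].
  by rewrite (perm_uniq Hfill) iota_uniq.
have Hinj : injective (fun x => val (f x)) by apply/injectiveP.
have Hrange x : 1 <= val (f x) <= N.
  have := perm_mem Hfill (val (f x)).
  rewrite (map_f (fun y => val (f y))) ?mem_enum // mem_iota => /esym; lia.
split => //; rewrite inE; apply/andP; split.
  apply/injectiveP => c c'; rewrite !ffunE => e.
  by have [] := Hinj (inr c) (inr c') (congr1 val e).
apply/forallP => c; rewrite ffunE.
have Hne i : 0 < i < n.+1 -> val (f (inr c)) != E i.
  move=> Hi; apply/eqP => e; have Hk : i.-1 < n by lia.
  have := Hdiag (Ordinal Hk).
  rewrite (_ : (Ordinal Hk).+1 = i) /=; last by lia.
  by rewrite -e => /Hinj.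
have H0 : E 0 < val (f (inr c)) by rewrite E0; have := Hrange (inr c); lia.
have H1 : val (f (inr c)) < E n.+1 by rewrite (eqP Hgood); have := Hrange (inr c); lia.
have [j jn Hj] := gap_exists H0 Hne H1.
have -> : label (f (inr c)) = Some (Ordinal jn) by apply/eqP; rewrite labelP.
apply: (allowed_of Hc Hgood (forallP Hbook c)) => //.
by case/andP: (Hrange (inr c)).
Qed.

Lemma cond_of (f : filling n r s) (c : Cell) (j : 'I_n.+1) :
  (forall j, j <= n.+1 -> e_ f j = E j) -> good ->
  E j < val (f (inr c)) < E j.+1 -> allowed c (Some j) ->
  (let i := (val c).1.1 in let a := val (val c).1.2 in let b := val (val c).2 in
   let x := val (f (inr c)) in
     ((r i < a) ==> (diag_entry f (a - r i) < x)) &&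
     ((b <= n) ==> (x < diag_entry f b))).
Proof.
move=> Hc Hgood.
case: c => [[[i a] b] Hp] /=.
have := Hp; rewrite /ndcell /page_cell /= => /andP[/and3P[Ha Hb Hab] _].
rewrite /allowed /clo /chi /=.
set v := val (f _) => /andP[Hj1 Hj2] /andP[Hlo Hhi].
apply/andP; split; apply/implyP => H.
  rewrite (diagE Hc); last by lia.
  move: Hlo; rewrite /lo_n H => Hlo.
  apply: leq_ltn_trans Hj1; exact: E_mono.
rewrite (diagE Hc); last by lia.
move: Hhi; rewrite /hi_n H => Hhi.
apply: leq_trans Hj2 _; exact: E_mono.
Qed.

Lemma card_book : #|{: book_cell n r s}| = N.
Proof. by rewrite card_sum card_ord addnC card_Cell. Qed.

Lemma SB_bwd (h : {ffun Cell -> 'I_N.+1}) : good -> h \in Hset ->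
  ext h \in @SB n m r s (fun j => val (d j)).
Proof.
move=> Hgood; rewrite inE => /andP[/injectiveP Hinj /forallP Hall].
set f := ext h.
have HEN k : k <= n.+1 -> E k <= N.+1 by move=> Hk; rewrite -(eqP Hgood); exact: E_mono.
have Hl (k : 'I_n) : val (f (inl k)) = E k.+1.
  rewrite ffunE; apply: inordK; rewrite -(eqP Hgood); apply: E_smono; by rewrite ltnS.
have Hr c : f (inr c) = h c by rewrite ffunE.
have Hlab c : exists2 j : 'I_n.+1, E j < val (f (inr c)) < E j.+1 & allowed c (Some j).
  move: (Hall c); rewrite Hr; case E1 : (label (h c)) => [j|] //= Hj.
  by exists j => //; rewrite -labelP E1.
have Hc : forall j, j <= n.+1 -> e_ f j = E j.
  case=> [|j] Hj; first by rewrite E0.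
  case: (ltnP j n) => jn.
    rewrite e_diag; last by lia.
    by rewrite (diag_entry_ord f (Ordinal jn)) Hl.
  have -> : j = n by lia.
  by rewrite e_last (eqP Hgood).
have Hval x : 1 <= val (f x) <= N.
  case: x => [k|c].
    rewrite Hl; have Hk : k.+1 < n.+1 by rewrite ltnS.
    have := E_smono Hk; rewrite (eqP Hgood) ES; lia.
  have [j /andP[H1 H2] _] := Hlab c.
  have := HEN j.+1 (ltn_ord j); lia.
have Hfinj : injective (fun x => val (f x)).
  case=> [k|c] [k'|c'] /=.
  - rewrite !Hl => /E_inj [] e; congr inl; exact: val_inj.
  - have [j /andP[H1 H2] _] := Hlab c'; rewrite Hl => e; exfalso.
    have e' : E k.+1 = val (f (inr c')) := e; rewrite -e' in H1 H2.
    case: (leqP j k) => jk.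
      by have := E_mono (jk : j.+1 <= k.+1); lia.
    by have := E_mono jk; lia.
  - have [j /andP[H1 H2] _] := Hlab c; rewrite Hl => e; exfalso.
    have e' : val (f (inr c)) = E k'.+1 := e; rewrite e' in H1 H2.
    case: (leqP j k') => jk.
      by have := E_mono (jk : j.+1 <= k'.+1); lia.
    by have := E_mono jk; lia.
  - by rewrite !Hr => /val_inj /Hinj ->.
rewrite inE; apply/andP; split; last by apply/chainP.
apply/andP; split.
  rewrite /is_filling.
  have Hu : uniq [seq val (f x) | x <- enum (book_cell n r s)].
    by apply/injectiveP.
  apply: uniq_perm => //; first exact: iota_uniq.
  have [] := uniq_min_size (s2 := iota 1 N) Hu.
  - move=> v /mapP[x _ ->]; rewrite mem_iota; have := Hval x; lia.
  - by rewrite size_iota size_map -cardE card_book.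
  by [].
apply/forallP => c.
have [j Hj Ha] := Hlab c.
exact: (cond_of Hc Hgood Hj Ha).
Qed.

Lemma card_SB_H : good ->
  #|@SB n m r s (fun j => val (d j))| = #|Hset|.
Proof.
move=> Hgood; rewrite -!sum1_card.
rewrite (reindex_onto ext restr); last first.
  move=> f /SB_fwd [_ Hdiag _]; apply/ffunP => -[k|c]; rewrite !ffunE //.
  by rewrite -Hdiag inord_val.
apply: eq_bigl => h; rewrite restr_ext eqxx andbT.
apply/idP/idP => [/SB_fwd [_ _] | /(SB_bwd Hgood) //].
by rewrite restr_ext.
Qed.

Definition gh (h : {ffun Cell -> 'I_N.+1}) : {ffun Cell -> 'I_n.+1} :=
  [ffun c => odflt ord0 (label (h c))].

Lemma card_Hset : #|Hset| = \sum_(g | @valid n m r s g)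
   #|[set h : {ffun Cell -> 'I_N.+1} |
        injectiveb h && [forall c, label (h c) == Some (g c)]]|.
Proof.
rewrite -sum1_card (partition_big gh (@valid n m r s)) /=; last first.
  move=> h; rewrite inE => /andP[_ /forallP H]; apply/forallP => c.
  move: (H c); rewrite ffunE; case: (label (h c)) => //.
apply: eq_bigr => g Hg; rewrite -sum1_card; apply: eq_bigl => h.
rewrite !inE; apply/idP/idP.
  case/andP => /andP[-> /forallP H] /eqP <-; apply/forallP => c.
  by move: (H c); rewrite ffunE; case: (label (h c)).
case/andP => -> /forallP H /=; apply/andP; split.
  apply/forallP => c; rewrite (eqP (H c)) /allowed.
  by move/forallP: Hg => /(_ c).
by apply/eqP/ffunP => c; rewrite ffunE (eqP (H c)).
Qed.

Lemma term_g (g : {ffun Cell -> 'I_n.+1}) : good ->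
  #|[set h : {ffun Cell -> 'I_N.+1} |
        injectiveb h && [forall c, label (h c) == Some (g c)]]| =
  \prod_(j < n.+1) (val (d j)) ^_ #|[pred c | g c == j]|.
Proof.
move=> Hgood.
rewrite (card_label_ffuns (fun c => Some (g c)) label).
rewrite big_option_split /=.
have -> : #|[pred a | Some (g a) == None]| = 0.
  by apply: eq_card0 => c; rewrite inE.
rewrite ffactn0 mul1n; apply: eq_bigr => j _.
rewrite card_label; last first.
  rewrite -(eqP Hgood); apply: E_mono; exact: ltn_ord.
by congr (_ ^_ _); apply: eq_card => c; rewrite !inE.
Qed.

Lemma sum_d : \sum_(j < n.+1) val (d j) + n.+1 = E n.+1.
Proof.
rewrite /E (eq_big_nat _ _ (F2 := fun i => dn i + 1)); last by move=> i _; rewrite addn1.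
rewrite big_split /= sum_nat_const_nat subn0 muln1 big_mkord; congr (_ + _).
by apply: eq_bigr => j _; rewrite dn_ord.
Qed.

Lemma sum_k (g : {ffun Cell -> 'I_n.+1}) :
  \sum_(j < n.+1) #|[pred c | g c == j]| + n = N.
Proof.
rewrite -(card_Cell n r s) -sum1_card (partition_big g xpredT) //=; congr (_ + _).
by apply: eq_bigr => j _; rewrite -sum1_card.
Qed.

Lemma cntE (g : {ffun Cell -> 'I_n.+1}) j : val (cnt g j) = #|[pred c | g c == j]|.
Proof. by rewrite ffunE; apply: inordK; apply: cnt_le. Qed.

Lemma main_count : #|@SB n m r s (fun j => val (d j))| =
  (\prod_(j < n.+1) (val (d j))`!) * #|Gd d|.
Proof.
case: (boolP good) => Hgood; last first.
  have -> : #|@SB n m r s (fun j => val (d j))| = 0.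
    apply: eq_card0 => f; apply/negP => /SB_fwd [H _ _].
    by rewrite H in Hgood.
  have -> : #|Gd d| = 0.
    apply: eq_card0 => g; rewrite inE; apply/negP => /andP[_ /eqP Hcnt].
    move/negP: Hgood; apply; apply/eqP; rewrite -sum_d.
    rewrite (eq_bigr (fun j => #|[pred c | g c == j]|)); last first.
      by move=> j _; rewrite -Hcnt cntE.
    by rewrite addnS (sum_k g).
  by rewrite muln0.
rewrite card_SB_H // card_Hset.
rewrite (eq_bigr (fun g : {ffun Cell -> 'I_n.+1} => \prod_(j < n.+1) val (d j) ^_ #|[pred c | g c == j]|)); last first.
  by move=> g _; rewrite term_g.
rewrite (bigID (fun g => cnt g == d)) /= [X in _ + X]big1 ?addn0; last first.
  move=> g /andP[Hv Hne].
  have Hsum : \sum_(j < n.+1) #|[pred c | g c == j]| = \sum_(j < n.+1) val (d j).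
    have H1 := sum_d; have H2 := sum_k g; have H3 := eqP Hgood; lia.
  case: (pickP (fun j => val (d j) < #|[pred c | g c == j]|)) => [j0 Hj0 | Hall].
    by rewrite (bigD1 j0) //= ffact_small // mul0n.
  exfalso; move/negP: Hne; apply; apply/eqP/ffunP => j; apply: val_inj.
  rewrite cntE.
  have Hle i : #|[pred c | g c == i]| <= val (d i) by rewrite leqNgt Hall.
  have := @sumnB _ (index_enum 'I_n.+1) xpredT _ _ (fun i _ => Hle i).
  rewrite Hsum subnn => /eqP; rewrite sum_nat_eq0 => /forallP /(_ j) /=.
  rewrite subn_eq0 => H; apply/eqP; rewrite eqn_leq (Hle j); exact: H.
rewrite (eq_bigr (fun _ => \prod_(j < n.+1) (val (d j))`!)); last first.
  move=> g /andP[_ /eqP Hc]; apply: eq_bigr => j _; rewrite -ffactnn; congr (_ ^_ _).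
  by rewrite -cntE Hc.
rewrite sum_nat_const mulnC; congr (_ * _); apply: eq_card => g.
by rewrite !inE.
Qed.

End Comb.
Import Num.Theory.
Local Open Scope ring_scope.

Theorem proposition4p11 (n m : nat) (r s : 'I_m -> nat) :
  (0 < n)%N -> (0 < m)%N ->
  \sum_(d : {ffun 'I_n.+1 -> 'I_(@SB_N n m r s).+1})
     (((#|@SB n m r s (fun j => val (d j))|)%:R
        / (\prod_(j < n.+1) ((val (d j))`!)%:R) : rat)
      *: \prod_(j < n.+1) 'X_j ^+ (val (d j)))
  = \prod_(1 <= i < n.+1)
        (tsum n 0 i ^+ @rsum m r * tsum n i n.+1 ^+ @ssum m s)
    * \prod_(i < m) tsum n 0 n.+1 ^+ (r i * s i)
    * \prod_(1 <= i < n.+1) \prod_(i.+1 <= j < n.+1) tsum n i j ^+ m.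
Proof.
move=> _ _; rewrite rhs_cells expand; apply: eq_bigr => d _; congr (_ *: _).
rewrite main_count natrM -natr_prod mulrC mulrA mulVf ?mul1r //.
rewrite pnatr_eq0 -lt0n; apply: prodn_gt0 => j; exact: fact_gt0.
Qed.
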